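(* For the CRF surrogate with decoding $d$ described in the context, the calibration function satisfies, for all $\varepsilon\ge0$, $$\zeta(\varepsilon)\ge\frac{\varepsilon^2}{8\,c_{\psi}^2\,c_{\phi}^2},\qquad c_\psi=\max_{z\in\mathcal{Z}}\|\psi(z)\|_2,\quad c_\phi=\max_{y\in\mathcal{Y}}\|\phi(y)\|_2 .$$
   Context: $\mathcal{Y},\mathcal{Z}$ finite sets, $\mathcal{H}$ a finite-dimensional real Euclidean space, $\psi:\mathcal{Z}\to\mathcal{H}$, $\phi:\mathcal{Y}\to\mathcal{H}$, $c\in\mathbb{R}$, $L(z,y)=\langle\psi(z),\phi(y)\rangle+c$. For $q\in\operatorname{Prob}(\mathcal{Y})$: $\mu(q)=\sum_y q(y)\phi(y)$, $\ell(z,q)=\mathbb{E}_{Y\sim q}L(z,Y)$, $\delta\ell(z,q)=\ell(z,q)-\min_{z'}\ell(z',q)$. The CRF surrogate is $S(v,y)=\log\sum_{y'\in\mathcal{Y}}\exp\langle v,\phi(y')\rangle-\langle v,\phi(y)\rangle$ for $v\in\mathcal{V}=\mathcal{H}$; $s(v,q)=\mathbb{E}_{Y\sim q}S(v,Y)$, $\delta s(v,q)=s(v,q)-\inf_{v'}s(v',q)$. For $v\in\mathcal{H}$ let $p_v(y)=\exp\langle\phi(y),v\rangle/\sum_{y'}\exp\langle\phi(y'),v\rangle$ and $m(v)=\sum_y p_v(y)\phi(y)$ (the marginals). The decoding is $d(v)$ = an element of $\arg\min_{z\in\mathcal{Z}}\langle\psi(z),m(v)\rangle$ (fixed tie-breaking).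 The calibration function is $\zeta(\varepsilon)=\inf\{\delta s(v,q):v\in\mathcal{H},q\in\operatorname{Prob}(\mathcal{Y}),\delta\ell(d(v),q)\ge\varepsilon\}$ ($\inf\emptyset=+\infty$). *)

(* Defs.v *)
From Stdlib Require Import Reals List Classical ClassicalEpsilon.
Open Scope R_scope.

(* Finite sets are represented by a type together with a duplicate-free
   list enumerating all of its elements (hypotheses stated in the theorem). *)

Definition lsum {A : Type} (l : list A) (f : A -> R) : R :=
  fold_right (fun a acc => f a + acc) 0 l.

Definition lmin {A : Type} (l : list A) (f : A -> R) : R :=
  match l with
  | nil => 0
  | a :: l' => fold_right (fun b acc => Rmin (f b) acc) (f a) l'
  end.

Definition lmax {A : Type} (l : list A) (f : A -> R) : R :=
  match l with
  | nil => 0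
  | a :: l' => fold_right (fun b acc => Rmax (f b) acc) (f a) l'
  end.

(* The Euclidean space H = R^n; vectors are functions nat -> R of which
   only the coordinates 0..n-1 matter. *)
Definition vec := nat -> R.

Definition inner (n : nat) (x y : vec) : R :=
  lsum (seq 0 n) (fun i => x i * y i).

Definition norm2 (n : nat) (x : vec) : R := sqrt (inner n x x).

Definition is_prob {Y : Type} (ys : list Y) (q : Y -> R) : Prop :=
  (forall y, 0 <= q y) /\ lsum ys q = 1.

Definition is_glb (P : R -> Prop) (m : R) : Prop :=
  (forall x, P x -> m <= x) /\ (forall b, (forall x, P x -> b <= x) -> b <= m).

Definition Rinf (P : R -> Prop) : R :=
  match excluded_middle_informative (exists m, is_glb P m) with
  | left h => proj1_sig (constructive_indefinite_description _ h)
  | right _ => 0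
  end.

Section CRF.
Context {Y Z : Type} (ys : list Y) (zs : list Z) (n : nat)
        (psi : Z -> vec) (phi : Y -> vec) (c : R).

Definition Lloss (z : Z) (y : Y) : R := inner n (psi z) (phi y) + c.

Definition mu (q : Y -> R) : vec := fun i => lsum ys (fun y => q y * phi y i).

Definition ell (z : Z) (q : Y -> R) : R := lsum ys (fun y => q y * Lloss z y).

Definition delta_ell (z : Z) (q : Y -> R) : R :=
  ell z q - lmin zs (fun z' => ell z' q).

Definition Ssur (v : vec) (y : Y) : R :=
  ln (lsum ys (fun y' => exp (inner n v (phi y')))) - inner n v (phi y).

Definition ssur (v : vec) (q : Y -> R) : R := lsum ys (fun y => q y * Ssur v y).

Definition delta_s (v : vec) (q : Y -> R) : R :=
  ssur v q - Rinf (fun r => exists v' : vec, r = ssur v' q).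

Definition pv (v : vec) (y : Y) : R :=
  exp (inner n (phi y) v) / lsum ys (fun y' => exp (inner n (phi y') v)).

Definition marg (v : vec) : vec := fun i => lsum ys (fun y => pv v y * phi y i).

Definition is_decoding (d : vec -> Z) : Prop :=
  forall v : vec, In (d v) zs /\
    forall z, In z zs -> inner n (psi (d v)) (marg v) <= inner n (psi z) (marg v).

(* the set whose infimum is the calibration function zeta(eps) *)
Definition calib_set (d : vec -> Z) (eps : R) (r : R) : Prop :=
  exists (v : vec) (q : Y -> R),
    is_prob ys q /\ delta_ell (d v) q >= eps /\ r = delta_s v q.

Definition c_psi : R := lmax zs (fun z => norm2 n (psi z)).
Definition c_phi : R := lmax ys (fun y => norm2 n (phi y)).

(* zeta(eps) >= b, with inf of the empty set = +infinity *)
Definition zeta_ge (d : vec -> Z) (eps b : R) : Prop :=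
  forall r, calib_set d eps r -> b <= r.

End CRF.

(* Main.v *)
Require Import Defs.
From Stdlib Require Import Reals List Lra Classical ClassicalEpsilon.
From Coquelicot Require Import Coquelicot.
Open Scope R_scope.

Lemma is_derive_lsum {Y : Type} (l : list Y) (f df : Y -> R -> R) (t : R) :
  (forall y, is_derive (f y) t (df y t)) ->
  is_derive (fun s => lsum l (fun y => f y s)) t (lsum l (fun y => df y t)).
Proof.
  intros H. induction l as [|a l IH]; simpl.
  - apply (is_derive_const 0 t).
  - apply (is_derive_plus (f a) (fun s => lsum l (fun y => f y s))); auto.
Qed.

Lemma decr_le (f df : R -> R) (t : R) :
  0 <= t -> (forall s, is_derive f s (df s)) -> (forall s, 0 <= s <= t -> df s <= 0) ->
  f t <= f 0.
Proof.
  intros Ht Hd Hn. destruct (Req_dec t 0) as [->|Ht0]; [lra|].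
  destruct (MVT_gen f 0 t df) as [c [Hc Heq]].
  - intros; apply Hd.
  - intros s _. apply continuity_pt_filterlim. apply (ex_derive_continuous f s).
    eexists; apply Hd.
  - rewrite Rmin_left in Hc by lra. rewrite Rmax_right in Hc by lra.
    assert (df c <= 0) by (apply Hn; lra).
    assert (df c * (t - 0) <= 0) by (apply Rmult_le_0_r; lra). lra.
Qed.

Lemma lsum_le {A : Type} (l : list A) (f g : A -> R) :
  (forall a, f a <= g a) -> lsum l f <= lsum l g.
Proof. intros H; induction l; simpl; [lra|]. specialize (H a); lra. Qed.

Lemma lsum_nonneg {A : Type} (l : list A) (f : A -> R) :
  (forall a, 0 <= f a) -> 0 <= lsum l f.
Proof. intros H; induction l; simpl; [lra|]. specialize (H a); lra. Qed.

Lemma lsum_pos {A : Type} (l : list A) (f : A -> R) :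
  l <> nil -> (forall a, 0 < f a) -> 0 < lsum l f.
Proof. intros Hl H; destruct l as [|a l]; [congruence|]; simpl.
  assert (0 <= lsum l f) by (apply lsum_nonneg; intros; left; auto).
  specialize (H a); lra. Qed.

Lemma lsum_scal {A : Type} (l : list A) (f : A -> R) k :
  lsum l (fun a => k * f a) = k * lsum l f.
Proof. induction l; simpl; [ring|]. rewrite IHl; ring. Qed.

Lemma is_derive_eq (f : R -> R) x l l' : is_derive f x l -> l = l' -> is_derive f x l'.
Proof. intros H ->; auto. Qed.

Section OneD.
Context {Y : Type} (l : list Y) (w x : Y -> R) (M : R).
Hypothesis Hl : l <> nil.
Hypothesis Hw : forall y, 0 < w y.
Hypothesis Hx : forall y, Rabs (x y) <= M.

Let Zf t := lsum l (fun y => w y * exp (t * x y)).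
Let Z1 t := lsum l (fun y => w y * x y * exp (t * x y)).
Let Z2 t := lsum l (fun y => w y * x y * x y * exp (t * x y)).

Lemma Zf_pos t : 0 < Zf t.
Proof. apply lsum_pos; auto. intros; apply Rmult_lt_0_compat; auto; apply exp_pos. Qed.

Lemma dZf t : is_derive Zf t (Z1 t).
Proof. unfold Zf, Z1.
  apply (is_derive_lsum l (fun y s => w y * exp (s * x y)) (fun y s => w y * x y * exp (s * x y))).
  intros y. auto_derive; auto. ring. Qed.

Lemma dZ1 t : is_derive Z1 t (Z2 t).
Proof. unfold Z1, Z2.
  apply (is_derive_lsum l (fun y s => w y * x y * exp (s * x y)) (fun y s => w y * x y * x y * exp (s * x y))).
  intros y. auto_derive; auto. ring. Qed.

Lemma Z2_le t : Z2 t <= M * M * Zf t.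
Proof. unfold Z2, Zf. rewrite <- lsum_scal. apply lsum_le. intros y.
  assert (x y * x y <= M * M).
  { specialize (Hx y). revert Hx. unfold Rabs; destruct (Rcase_abs (x y)); intros; nra. }
  assert (0 < w y * exp (t * x y)) by (apply Rmult_lt_0_compat; auto; apply exp_pos).
  nra.
Qed.

Lemma oneD t : 0 <= t ->
  ln (Zf t) <= ln (Zf 0) + t * (Z1 0 / Zf 0) + M * M * t * t / 2.
Proof.
  intros Ht.
  set (K := fun s => Z1 s / Zf s - M * M * s).
  set (dK := fun s => (Z2 s * Zf s - Z1 s * Z1 s) / (Zf s)^2 - M * M).
  assert (HK : forall s, is_derive K s (dK s)).
  { intros s. unfold K, dK.
    apply (is_derive_minus (fun s => Z1 s / Zf s) (fun s => M * M * s)).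
    - apply is_derive_div; [apply dZ1|apply dZf|]. apply Rgt_not_eq, Zf_pos.
    - eapply is_derive_eq. apply is_derive_scal, is_derive_id. simpl. unfold one; simpl. ring. }
  assert (HdK : forall s, dK s <= 0).
  { intros s. unfold dK. pose proof (Zf_pos s). pose proof (Z2_le s).
    assert ((Z2 s * Zf s - Z1 s * Z1 s) / Zf s ^ 2 <= M * M); [|lra].
    apply Rmult_le_reg_r with (Zf s ^ 2). nra.
    unfold Rdiv. rewrite Rmult_assoc, Rinv_l by (apply pow_nonzero; lra). rewrite Rmult_1_r. assert (0 <= Z1 s * Z1 s) by nra. assert (Z2 s * Zf s <= M * M * Zf s * Zf s) by (apply Rmult_le_compat_r; lra). simpl. lra. }
  set (H := fun s => ln (Zf s) - s * (Z1 0 / Zf 0) - M * M * s * s / 2).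
  assert (HH : forall s, is_derive H s (K s - K 0)).
  { intros s. unfold H, K.
    pose proof (Zf_pos s).
    eapply is_derive_eq.
    apply (is_derive_minus (fun s => ln (Zf s) - s * (Z1 0 / Zf 0)) (fun s => M * M * s * s / 2)).
    apply (is_derive_minus (fun s => ln (Zf s)) (fun s => s * (Z1 0 / Zf 0))).
    apply (is_derive_comp ln Zf). apply is_derive_ln; auto. apply dZf.
    auto_derive; auto. auto_derive; auto.
    simpl. unfold minus, plus, opp, scal; simpl. unfold mult; simpl. field. pose proof (Zf_pos 0); split; lra. }
  assert (H t <= H 0).
  { apply (decr_le H (fun s => K s - K 0)); auto.
    intros s Hs. assert (K s <= K 0); [|lra].
    apply (decr_le K dK); [lra|exact HK|]. intros; apply HdK. }
  unfold H in *. lra.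
Qed.

End OneD.

Lemma lsum_ext {A : Type} (l : list A) (f g : A -> R) :
  (forall a, f a = g a) -> lsum l f = lsum l g.
Proof. intros H; induction l; simpl; auto. rewrite H, IHl; auto. Qed.

Lemma lsum_plus {A : Type} (l : list A) (f g : A -> R) :
  lsum l (fun a => f a + g a) = lsum l f + lsum l g.
Proof. induction l; simpl; [ring|]. rewrite IHl; ring. Qed.

Lemma lsum_minus {A : Type} (l : list A) (f g : A -> R) :
  lsum l (fun a => f a - g a) = lsum l f - lsum l g.
Proof. induction l; simpl; [ring|]. rewrite IHl; ring. Qed.

Lemma lsum_scal_r {A : Type} (l : list A) (f : A -> R) k :
  lsum l (fun a => f a * k) = lsum l f * k.
Proof. induction l; simpl; [ring|]. rewrite IHl; ring. Qed.

Lemma lsum_comm {A B : Type} (l1 : list A) (l2 : list B) (f : A -> B -> R) :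
  lsum l1 (fun a => lsum l2 (fun b => f a b)) = lsum l2 (fun b => lsum l1 (fun a => f a b)).
Proof. induction l1 as [|a l1 IH]; simpl.
  - induction l2; simpl; auto. rewrite <- IHl2; ring.
  - rewrite IH. rewrite <- lsum_plus. auto. Qed.

Lemma lsum_ge_In {A : Type} (l : list A) (f : A -> R) a :
  In a l -> (forall b, 0 <= f b) -> f a <= lsum l f.
Proof. intros Hi H; induction l as [|b l IH]; simpl in *; [tauto|].
  destruct Hi as [->|Hi].
  - assert (0 <= lsum l f) by (apply lsum_nonneg; auto). lra.
  - specialize (IH Hi). specialize (H b). lra. Qed.

Lemma fold_max_ge {A : Type} (f : A -> R) (l : list A) i :
  i <= fold_right (fun b acc => Rmax (f b) acc) i l /\
  forall a, In a l -> f a <= fold_right (fun b acc => Rmax (f b) acc) i l.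
Proof. induction l as [|b l IH]; simpl; [split; [lra|tauto]|].
  destruct IH as [H1 H2]. split.
  - eapply Rle_trans; [exact H1|apply Rmax_r].
  - intros a [->|Ha]; [apply Rmax_l|]. eapply Rle_trans; [apply H2; auto|apply Rmax_r]. Qed.

Lemma lmax_ge {A : Type} (l : list A) (f : A -> R) a : In a l -> f a <= lmax l f.
Proof. destruct l as [|b l]; simpl; [tauto|].
  destruct (fold_max_ge f l (f b)) as [H1 H2]. intros [E|H]; [subst; auto|auto]. Qed.

Lemma fold_min_att {A : Type} (f : A -> R) (l : list A) i :
  fold_right (fun b acc => Rmin (f b) acc) i l = i \/
  exists a, In a l /\ fold_right (fun b acc => Rmin (f b) acc) i l = f a.
Proof. induction l as [|b l IH]; simpl; [auto|].
  destruct (Rle_dec (f b) (fold_right (fun b acc => Rmin (f b) acc) i l)) as [h|h].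
  - right; exists b; split; auto. apply Rmin_left; auto.
  - rewrite Rmin_right by lra. destruct IH as [H|[a [Ha H]]]; auto. right; exists a; auto. Qed.

Lemma lmin_att {A : Type} (l : list A) (f : A -> R) :
  l <> nil -> exists a, In a l /\ lmin l f = f a.
Proof. destruct l as [|b l]; [congruence|]; intros _; simpl.
  destruct (fold_min_att f l (f b)) as [H|[a [Ha H]]].
  - exists b; auto.
  - exists a; auto. Qed.

Lemma Rinf_le (P : R -> Prop) x : (exists m, is_glb P m) -> P x -> Rinf P <= x.
Proof. intros He Hx. unfold Rinf. destruct (excluded_middle_informative _) as [h|h]; [|contradiction].
  destruct (constructive_indefinite_description _ h) as [m Hm]; simpl. apply Hm; auto. Qed.

Lemma glb_exists (P : R -> Prop) x0 : P x0 -> (forall x, P x -> 0 <= x) -> exists m, is_glb P m.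
Proof. intros H0 Hb.
  destruct (completeness (fun x => P (- x))) as [m [Hm1 Hm2]].
  - exists 0. intros x Hx. specialize (Hb _ Hx). lra.
  - exists (- x0). rewrite Ropp_involutive; auto.
  - exists (- m). split.
    + intros x Hx. assert (- x <= m) by (apply Hm1; rewrite Ropp_involutive; auto). lra.
    + intros b Hbb. assert (m <= - b); [|lra]. apply Hm2. intros x Hx. specialize (Hbb _ Hx). lra. Qed.

Lemma inner_sym n x y : inner n x y = inner n y x.
Proof. unfold inner; apply lsum_ext; intros; ring. Qed.

Lemma inner_nonneg n x : 0 <= inner n x x.
Proof. unfold inner; apply lsum_nonneg; intros; nra. Qed.

Lemma inner_quad n u d k :
  inner n (fun i => u i + k * d i) (fun i => u i + k * d i) =
  inner n u u + 2 * k * inner n u d + k * k * inner n d d.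
Proof. unfold inner.
  rewrite (lsum_ext _ _ (fun i => (u i * u i + (2 * k) * (u i * d i)) + (k * k) * (d i * d i))) by (intros; ring).
  rewrite !lsum_plus, !lsum_scal. ring. Qed.

Lemma CS n u d : inner n u d * inner n u d <= inner n u u * inner n d d.
Proof.
  pose proof (inner_nonneg n u). pose proof (inner_nonneg n d).
  set (A := inner n u u) in *. set (B := inner n u d). set (C := inner n d d) in *.
  destruct (Req_dec C 0) as [HC|HC].
  - destruct (Req_dec B 0) as [HB|HB]; [rewrite HB, HC; lra|].
    pose proof (inner_nonneg n (fun i => u i + (- (A + 1) / (2 * B)) * d i)) as Hq.
    rewrite inner_quad in Hq. fold A B C in Hq. rewrite HC in Hq.
    replace (2 * (- (A + 1) / (2 * B)) * B) with (- (A + 1)) in Hq by (field; auto). lra.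
  - pose proof (inner_nonneg n (fun i => u i + (- B / C) * d i)) as Hq.
    rewrite inner_quad in Hq. fold A B C in Hq.
    assert (0 < C) by lra.
    replace (A + 2 * (- B / C) * B + - B / C * (- B / C) * C) with (A - B * B / C) in Hq by (field; auto).
    assert (B * B / C <= A) by lra.
    apply Rmult_le_reg_r with (/ C). apply Rinv_0_lt_compat; auto.
    replace (A * C * / C) with A by (field; auto). exact H2. Qed.

Lemma CS_abs n u d : Rabs (inner n u d) <= norm2 n u * sqrt (inner n d d).
Proof. unfold norm2. rewrite <- sqrt_mult by apply inner_nonneg.
  rewrite <- sqrt_Rsqr_abs. apply sqrt_le_1_alt. unfold Rsqr. apply CS. Qed.

Lemma inner_mu {Y} (ys : list Y) n (phi : Y -> vec) u q :
  inner n u (mu ys phi q) = lsum ys (fun y => q y * inner n u (phi y)).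
Proof. unfold inner, mu.
  rewrite (lsum_ext _ _ (fun i => lsum ys (fun y => q y * (u i * phi y i)))).
  2:{ intros i. rewrite <- lsum_scal. apply lsum_ext; intros; ring. }
  rewrite lsum_comm. apply lsum_ext; intros y. rewrite lsum_scal; auto. Qed.

Lemma ell_eq {Y Z} (ys : list Y) n (psi : Z -> vec) phi c z q : is_prob ys q ->
  ell ys n psi phi c z q = inner n (psi z) (mu ys phi q) + c.
Proof. intros [_ H1]. unfold ell, Lloss.
  rewrite (lsum_ext _ _ (fun y => q y * inner n (psi z) (phi y) + c * q y)) by (intros; ring).
  rewrite lsum_plus, lsum_scal, H1, inner_mu. ring. Qed.

Lemma ssur_eq {Y} (ys : list Y) n phi v q : is_prob ys q ->
  ssur ys n phi v q = ln (lsum ys (fun y' => exp (inner n v (phi y')))) - inner n v (mu ys phi q).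
Proof. intros [_ H1]. unfold ssur, Ssur.
  rewrite lsum_ext with (g := fun y => ln (lsum ys (fun y' => exp (inner n v (phi y')))) * q y - q y * inner n v (phi y)) by (intros; ring).
  rewrite lsum_minus, lsum_scal, H1, inner_mu. ring. Qed.

Lemma ln_le' x y : 0 < x -> x <= y -> ln x <= ln y.
Proof. intros Hx [H|H]; [left; apply ln_increasing; auto|subst; lra]. Qed.

Lemma Ssur_nonneg {Y} (ys : list Y) n phi v y : In y ys -> 0 <= Ssur ys n phi v y.
Proof. intros Hy. unfold Ssur.
  assert (exp (inner n v (phi y)) <= lsum ys (fun y' => exp (inner n v (phi y')))).
  { apply (lsum_ge_In ys (fun y' => exp (inner n v (phi y')))); auto. intros; left; apply exp_pos. }
  assert (ln (exp (inner n v (phi y))) <= ln (lsum ys (fun y' => exp (inner n v (phi y'))))).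
  { apply ln_le'; auto. apply exp_pos. }
  rewrite ln_exp in H0. lra. Qed.

Lemma Rabs_le_both x y : Rabs x <= y -> - y <= x <= y.
Proof. unfold Rabs; destruct (Rcase_abs x); intros; lra. Qed.

Lemma inner_comb n x y z k :
  inner n (fun i => x i - k * y i) z = inner n x z - k * inner n y z.
Proof. unfold inner. rewrite <- lsum_scal, <- lsum_minus. apply lsum_ext; intros; ring. Qed.

Lemma inner_diff_r n u x y :
  inner n u (fun i => x i - y i) = inner n u x - inner n u y.
Proof. unfold inner. rewrite <- lsum_minus. apply lsum_ext; intros; ring. Qed.

Theorem proposition5p2
  (Y Z : Type) (ys : list Y) (zs : list Z)
  (Hys : forall y : Y, In y ys) (Hysnd : NoDup ys) (Hysne : ys <> nil)
  (Hzs : forall z : Z, In z zs) (Hzsnd : NoDup zs) (Hzsne : zs <> nil)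
  (n : nat) (psi : Z -> vec) (phi : Y -> vec) (c : R)
  (d : vec -> Z) (Hd : is_decoding ys zs n psi phi d)
  (eps : R) (Heps : 0 <= eps) :
  zeta_ge ys zs n psi phi c d eps
    (eps ^ 2 / (8 * (c_psi zs n psi) ^ 2 * (c_phi ys n phi) ^ 2)).
Proof.
  intros r [v [q [Hq [Hell ->]]]].
  set (dl := fun i => marg ys n phi v i - mu ys phi q i).
  set (D := inner n dl dl).
  set (a := c_psi zs n psi). set (b := c_phi ys n phi).
  assert (HD : 0 <= D) by apply inner_nonneg.
  assert (Hpsi : forall z, Rabs (inner n (psi z) dl) <= a * sqrt D).
  { intros z. eapply Rle_trans; [apply CS_abs|]. apply Rmult_le_compat_r; [apply sqrt_pos|].
    apply (lmax_ge zs (fun z => norm2 n (psi z))); auto. }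
  assert (Hphi : forall y, Rabs (inner n dl (phi y)) <= b * sqrt D).
  { intros y. rewrite inner_sym. eapply Rle_trans; [apply CS_abs|]. apply Rmult_le_compat_r; [apply sqrt_pos|].
    apply (lmax_ge ys (fun y => norm2 n (phi y))); auto. }
  assert (He : eps <= 2 * a * sqrt D).
  { unfold delta_ell in Hell.
    destruct (lmin_att zs (fun z' => ell ys n psi phi c z' q) Hzsne) as [z0 [_ Hz]].
    rewrite Hz in Hell. rewrite !ell_eq in Hell by auto.
    destruct (Hd v) as [_ Hdv]. specialize (Hdv z0 (Hzs z0)).
    assert (Hlin : forall u, inner n u (mu ys phi q) = inner n u (marg ys n phi v) - inner n u dl).
    { intros u. unfold dl. rewrite inner_diff_r. ring. }
    rewrite !Hlin in Hell.
    pose proof (Rabs_le_both _ _ (Hpsi (d v))). pose proof (Rabs_le_both _ _ (Hpsi z0)). lra. }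
  assert (He2 : eps ^ 2 <= 4 * (a ^ 2) * D).
  { assert (sqrt D * sqrt D = D) by (apply sqrt_sqrt; auto).
    assert (eps * eps <= (2 * a * sqrt D) * (2 * a * sqrt D)) by (apply Rmult_le_compat; lra).
    simpl. nra. }
  assert (Hglb : exists m0, is_glb (fun r => exists v' : vec, r = ssur ys n phi v' q) m0).
  { apply (glb_exists _ (ssur ys n phi v q)); [exists v; auto|].
    intros x [v' ->]. unfold ssur. apply lsum_nonneg. intros y.
    apply Rmult_le_pos; [apply Hq|apply Ssur_nonneg; auto]. }
  set (W := fun y => exp (inner n v (phi y))).
  set (X := fun y => - inner n dl (phi y)).
  set (Zv := lsum ys W).
  assert (HZv : 0 < Zv) by (apply lsum_pos; auto; intros; apply exp_pos).
  assert (Hm : inner n dl (marg ys n phi v) = lsum ys (fun y => W y * inner n dl (phi y)) * / Zv).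
  { unfold marg. change (inner n dl (mu ys phi (pv ys n phi v)) = lsum ys (fun y => W y * inner n dl (phi y)) * / Zv).
    rewrite inner_mu. rewrite <- lsum_scal_r. apply lsum_ext. intros y.
    unfold pv, W, Zv. rewrite (inner_sym n (phi y) v).
    rewrite (lsum_ext ys (fun y' => exp (inner n (phi y') v)) (fun y' => exp (inner n v (phi y')))) by (intros; rewrite inner_sym; auto).
    unfold Rdiv, W. ring. }
  assert (Hs : forall t, 0 <= t -> delta_s ys n phi v q >= t * D - b * b * D * t * t / 2).
  { intros t Ht.
    set (w := fun i => v i - t * dl i).
    assert (Hinf : Rinf (fun r => exists v' : vec, r = ssur ys n phi v' q) <= ssur ys n phi w q).
    { apply Rinf_le; auto. exists w; auto. }
    assert (Hb : forall y, Rabs (X y) <= b * sqrt D).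
    { intros y. unfold X. rewrite Rabs_Ropp. apply Hphi. }
    pose proof (oneD ys W X (b * sqrt D) Hysne (fun y => exp_pos _) Hb t Ht) as H1.
    cbv beta in H1.     rewrite (lsum_ext ys (fun y => W y * exp (0 * X y)) W) in H1 by (intros; rewrite Rmult_0_l, exp_0; ring).
    rewrite (lsum_ext ys (fun y => W y * X y * exp (0 * X y)) (fun y => (-1) * (W y * inner n dl (phi y)))) in H1
      by (intros; rewrite Rmult_0_l, exp_0; unfold X; ring).
    rewrite lsum_scal in H1. fold Zv in H1.
    rewrite (lsum_ext ys (fun y => W y * exp (t * X y)) (fun y => exp (inner n w (phi y)))) in H1.
    2:{ intros y. unfold W, X, w. rewrite inner_comb, <- exp_plus. f_equal. ring. }
    unfold delta_s. rewrite !ssur_eq in * by auto.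
    unfold w in Hinf. rewrite inner_comb in Hinf.
    assert (Hdd : inner n dl (marg ys n phi v) - inner n dl (mu ys phi q) = D).
    { unfold D. rewrite <- inner_diff_r. auto. }
    assert (HMM : b * sqrt D * (b * sqrt D) = b * b * D).
    { replace (b * sqrt D * (b * sqrt D)) with (b * b * (sqrt D * sqrt D)) by ring. rewrite sqrt_sqrt; auto. }
    rewrite HMM in H1. rewrite Hm in Hdd.
    replace (-1 * lsum ys (fun y => W y * inner n dl (phi y)) / Zv) with (- (lsum ys (fun y => W y * inner n dl (phi y)) * / Zv)) in H1 by (unfold Rdiv; ring).
    fold w in Hinf.
    assert (EE : t * - (lsum ys (fun y => W y * inner n dl (phi y)) * / Zv) = - (t * D) - t * inner n dl (mu ys phi q)) by (rewrite <- Hdd; ring).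
    rewrite EE in H1. unfold Zv, W in H1. lra. }
  destruct (Req_dec (8 * a ^ 2 * b ^ 2) 0) as [H0|H0].
  - unfold Rdiv. rewrite H0, Rinv_0, Rmult_0_r. pose proof (Hs 0 (Rle_refl 0)). lra.
  - assert (Ha : a <> 0) by (intro E; apply H0; rewrite E; ring).
    assert (Hb0 : b <> 0) by (intro E; apply H0; rewrite E; ring).
    assert (Hbb : 0 < b * b) by (apply Rsqr_pos_lt; auto).
    assert (Haa : 0 < a * a) by (apply Rsqr_pos_lt; auto).
    pose proof (Hs (/ (b * b)) (Rlt_le _ _ (Rinv_0_lt_compat _ Hbb))) as H2.
    replace (/ (b * b) * D - b * b * D * / (b * b) * / (b * b) / 2) with (D / (2 * (b * b))) in H2 by (field; auto).
    assert (eps ^ 2 / (8 * a ^ 2 * b ^ 2) <= D / (2 * (b * b))); [|lra].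
    replace (D / (2 * (b * b))) with (4 * a ^ 2 * D / (8 * a ^ 2 * b ^ 2)) by (field; auto).
    unfold Rdiv. apply Rmult_le_compat_r; auto.
    left. apply Rinv_0_lt_compat. simpl. nra.
Qed.
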